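(* For every $d$-dimensional state $\rho$, every $\epsilon>0$ and every real-valued function $f$ on the set of probability distributions on $[d]$, \[ \min_{q\in V_\epsilon(\delta_\rho)}f(q)\le\min_{\sigma\in V_\epsilon(\rho)}f(\delta_\sigma)\le\min_{q\in V_{\epsilon^2/4}(\delta_\rho)}f(q). \]
   Context: Fixed computational basis; $\Pi_I=\sum_{i\in I}|i\rangle\langle i|$. For a state $\omega$, $\delta_\omega\in\mathbb R^d$ is its diagonal, $(\delta_\omega)_j=\omega_{jj}$. Quantum set: $V_\epsilon(\rho)=\{\Pi_I\rho\Pi_I/\mathrm{Tr}[\rho\Pi_I]:\ I\subseteq[d]\}\cap\{\sigma:\|\sigma-\rho\|_1\le\epsilon\}$ (only $I$ with $\mathrm{Tr}[\rho\Pi_I]>0$). Classical set for a probability vector $p\in\mathbb R^d$: $V_\epsilon(p)=\{\Pi_Ip/\sum_{i\in I}p_i:\ I\subseteq[d]\}\cap\{q:|q-p|_1\le\epsilon\}$ (only $I$ with $\sum_{i\in I}p_i>0$), $|\cdot|_1$ the $\ell_1$ norm and $\Pi_Ip$ the vector keeping the entries of $p$ indexed by $I$ and zeroing the others. *)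

(* Defs.v *)
From HB Require Import structures.
From mathcomp Require Import all_boot all_order all_algebra.
From mathcomp.real_closed Require Import complex.
Set Implicit Arguments. Unset Strict Implicit. Unset Printing Implicit Defensive.
Import Order.TTheory GRing.Theory Num.Theory.
Local Open Scope ring_scope.

Section Defs.
Variable R : rcfType.
Local Notation C := R[i].

Definition adjmx m n (A : 'M[C]_(m, n)) : 'M[C]_(n, m) := (map_mx Num.conj A)^T.

(* positive semidefinite: v^* A v is real and >= 0 for every vector v *)
Definition psd d (A : 'M[C]_d) : Prop :=
  forall v : 'cV[C]_d, 0 <= (adjmx v *m A *m v) 0 0.

Definition is_state d (rho : 'M[C]_d) : Prop := psd rho /\ \tr rho = 1.

(* t is the trace norm ||A||_1 = Tr sqrt(A^* A), where sqrt is the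
   (unique) positive semidefinite square root *)
Definition is_trace_norm d (A : 'M[C]_d) (t : R) : Prop :=
  exists S : 'M[C]_d, [/\ psd S, S *m S = adjmx A *m A & \tr S = (t%:C)%C].

Definition trnorm_le d (A : 'M[C]_d) (eps : R) : Prop :=
  exists t, is_trace_norm A t /\ t <= eps.

Definition projI d (I : {set 'I_d}) : 'M[C]_d :=
  \matrix_(i, j) ((i == j) && (i \in I))%:R.

Definition diagv d (w : 'M[C]_d) : 'rV[R]_d := \row_j complex.Re (w j j).

Definition l1norm d (p : 'rV[R]_d) : R := \sum_j `|p 0 j|.

Definition Vq d (eps : R) (rho : 'M[C]_d) : 'M[C]_d -> Prop :=
  fun sigma => exists I : {set 'I_d},
    [/\ 0 < \tr (rho *m projI I),
        sigma = (\tr (rho *m projI I))^-1 *: (projI I *m rho *m projI I)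
      & trnorm_le (sigma - rho) eps].

Definition Vc d (eps : R) (p : 'rV[R]_d) : 'rV[R]_d -> Prop :=
  fun q => exists I : {set 'I_d},
    [/\ 0 < \sum_(i in I) p 0 i,
        q = (\sum_(i in I) p 0 i)^-1 *: (\row_j (if j \in I then p 0 j else 0))
      & l1norm (q - p) <= eps].

End Defs.

(* Main.v *)
Require Import Defs.
From HB Require Import structures.
From mathcomp Require Import all_boot all_order all_algebra.
From mathcomp.real_closed Require Import complex.
From mathcomp Require Import ring lra.
Import Order.TTheory GRing.Theory Num.Theory.
Local Open Scope ring_scope.
Set Implicit Arguments. Unset Strict Implicit. Unset Printing Implicit Defensive.

Section Work.
Variable R : rcfType.
Local Notation C := R[i].
Local Notation toC x := ((x)%:C)%C.

Lemma adjmxE m n (A : 'M[C]_(m,n)) i j : adjmx A i j = (A j i)^*.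
Proof. by rewrite !mxE. Qed.

Lemma adjmxK m n (A : 'M[C]_(m,n)) : adjmx (adjmx A) = A.
Proof. by apply/matrixP => i j; rewrite !mxE conjCK. Qed.

Lemma adjmxM m n p (A : 'M[C]_(m,n)) (B : 'M[C]_(n,p)) :
  adjmx (A *m B) = adjmx B *m adjmx A.
Proof. by rewrite /adjmx map_mxM trmx_mul. Qed.

Lemma adjmxD m n (A B : 'M[C]_(m,n)) : adjmx (A + B) = adjmx A + adjmx B.
Proof. by apply/matrixP => i j; rewrite !mxE rmorphD. Qed.

Lemma adjmxN m n (A : 'M[C]_(m,n)) : adjmx (- A) = - adjmx A.
Proof. by apply/matrixP => i j; rewrite !mxE rmorphN. Qed.

Lemma adjmxB m n (A B : 'M[C]_(m,n)) : adjmx (A - B) = adjmx A - adjmx B.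
Proof. by rewrite adjmxD adjmxN. Qed.

Lemma adjmxZ m n c (A : 'M[C]_(m,n)) : adjmx (c *: A) = c^* *: adjmx A.
Proof. by apply/matrixP => i j; rewrite !mxE rmorphM. Qed.

Lemma adjmx1 n : adjmx (1%:M : 'M[C]_n) = 1%:M.
Proof. by apply/matrixP => i j; rewrite !mxE eq_sym rmorph_nat. Qed.

Lemma adjmx_diag n (d : 'rV[C]_n) :
  adjmx (diag_mx d) = diag_mx (\row_j (d 0 j)^*).
Proof.
apply/matrixP => i j; rewrite !mxE eq_sym; case: eqP => [->|]; 
  by rewrite ?mulr1n ?mulr0n ?rmorph0.
Qed.

Lemma tr_adjmx n (A : 'M[C]_n) : \tr (adjmx A) = (\tr A)^*.
Proof. by rewrite /mxtrace rmorph_sum; apply: eq_bigr => i _; rewrite !mxE. Qed.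

Lemma adjmx_delta n (i : 'I_n) :
  adjmx (delta_mx i 0 : 'cV[C]_n) = delta_mx 0 i.
Proof. by apply/matrixP => a b; rewrite !mxE rmorph_nat andbC. Qed.

Lemma form_delta n (S : 'M[C]_n) i j :
  (adjmx (delta_mx i 0 : 'cV[C]_n) *m S *m (delta_mx j 0 : 'cV[C]_n)) 0 0 = S i j.
Proof. by rewrite adjmx_delta -rowE -colE !mxE. Qed.

Lemma form_expand n (S : 'M[C]_n) (u w : 'cV[C]_n) c :
  (adjmx (u + c *: w) *m S *m (u + c *: w)) 0 0 =
  ((adjmx u *m S *m u) 0 0 + c^* * c * (adjmx w *m S *m w) 0 0) +
  (c * (adjmx u *m S *m w) 0 0 + c^* * (adjmx w *m S *m u) 0 0).
Proof.
rewrite adjmxD adjmxZ !mulmxDl !mulmxDr -!scalemxAl -!scalemxAr !mxE.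
ring.
Qed.

Lemma real_cancel {a x : C} : a^* = a -> (a + x)^* = a + x -> x^* = x.
Proof. by move=> ha; rewrite raddfD /= ha => /addrI. Qed.

Lemma herm_aux (z w : C) : (z + w)^* = z + w ->
  ('i * z - 'i * w)^* = 'i * z - 'i * w -> w^* = z.
Proof.
rewrite raddfD raddfB /= !rmorphM /= conjCi => h1 h2.
have e : 2 * w^* - 2 * z = ((z^* + w^*) - (z + w)) +
   (-'i) * ((-'i * z^* - -'i * w^*) - ('i * z - 'i * w))
   - (1 + 'i ^+ 2) * (z^* - w^* + z - w) by ring.
move: e; rewrite h1 h2 !subrr sqrCi subrr mul0r mulr0 !subr0 addr0.
have two : (2:C) != 0 by rewrite pnatr_eq0.
move/eqP; rewrite subr_eq0 => /eqP; exact: (mulfI two).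
Qed.

Local Notation ecol i := (delta_mx i 0 : 'cV[C]_ _).

Lemma psd_herm n (S : 'M[C]_n) : psd S -> adjmx S = S.
Proof.
move=> pS; have re (v : 'cV[C]_n) : ((adjmx v *m S *m v) 0 0)^* = (adjmx v *m S *m v) 0 0.
  by apply/CrealP; apply: ger0_real; apply: pS.
apply/matrixP => i j; rewrite adjmxE.
have Ri := re (ecol i); have Rj := re (ecol j).
rewrite form_delta in Ri; rewrite form_delta in Rj.
have Ra c : (S i i + c^* * c * S j j)^* = S i i + c^* * c * S j j.
  by rewrite raddfD /= !rmorphM /= conjCK Ri Rj (mulrC c).
have e1 := re (ecol i + 1 *: ecol j).
have e2 := re (ecol i + 'i *: ecol j).
rewrite form_expand !form_delta in e1.
rewrite form_expand !form_delta in e2.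
move/(real_cancel (Ra 1)): e1; rewrite rmorph1 !mul1r => e1.
move/(real_cancel (Ra ('i))): e2; rewrite conjCi mulNr => e2.
exact: herm_aux e1 e2.
Qed.


Lemma herm_spectral n (A : 'M[C]_n) : adjmx A = A ->
  exists (P : 'M[C]_n) (d : 'rV[C]_n),
    [/\ P *m adjmx P = 1%:M, adjmx P *m P = 1%:M,
        A = adjmx P *m diag_mx d *m P & forall k, d 0 k \is Num.real].
Proof.
move=> hA.
have hh : A \is hermsymmx.
  have e : (A ^t* = adjmx A)%sesqui by rewrite /adjmx map_trmx.
  by apply/is_hermitianmxP; rewrite expr0 scale1r e hA.
have /orthomx_spectralP eA := hermitian_normalmx hh.
have /hermitian_spectral_diag_real /mxOverP hr := hh.
have hu := spectral_unitarymx A.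
have e : adjmx (spectralmx A) = ((spectralmx A) ^t*)%sesqui by rewrite /adjmx map_trmx.
have hu' : spectralmx A *m adjmx (spectralmx A) = 1%:M by rewrite e; exact: (unitarymxP hu).
exists (spectralmx A), (spectral_diag A); split.
- exact: hu'.
- exact: mulmx1C hu'.
- by rewrite e -invmx_unitary.
- by move=> k; apply: hr.
Qed.


Lemma addmxE' m n (M N : 'M[C]_(m,n)) i j : (M + N) i j = M i j + N i j.
Proof. by rewrite mxE. Qed.
Lemma oppmxE' m n (M : 'M[C]_(m,n)) i j : (- M) i j = - M i j.
Proof. by rewrite mxE. Qed.
Lemma diag_mulE n (d : 'rV[C]_n) (Y : 'M[C]_n) i j :
  (diag_mx d *m Y) i j = d 0 i * Y i j.
Proof. by rewrite mul_diag_mx mxE. Qed.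
Lemma diagE n (d : 'rV[C]_n) i : diag_mx d i i = d 0 i.
Proof. by rewrite mxE eqxx mulr1n. Qed.

Lemma adjmx_diag_real n (d : 'rV[C]_n) : (forall k, d 0 k \is Num.real) ->
  adjmx (diag_mx d) = diag_mx d.
Proof.
move=> hd; rewrite adjmx_diag; congr diag_mx; apply/rowP => k.
by rewrite mxE; apply/CrealP.
Qed.

Lemma adjM_diag_ge0 m n (M : 'M[C]_(m,n)) k : 0 <= (adjmx M *m M) k k.
Proof.
rewrite mxE; apply: sumr_ge0 => i _; rewrite adjmxE mulrC; exact: mul_conjC_ge0.
Qed.

Lemma adjM_diag_eq0 m n (M : 'M[C]_(m,n)) k : (adjmx M *m M) k k = 0 ->
  forall i, M i k = 0.
Proof.
rewrite mxE => /psumr_eq0P h i.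
have h0 : forall j, true -> 0 <= adjmx M k j * M j k.
  by move=> j _; rewrite adjmxE mulrC; exact: mul_conjC_ge0.
have := h h0 i isT; rewrite adjmxE => /eqP.
by rewrite mulf_eq0 conjC_eq0 orbb => /eqP.
Qed.

Lemma form_deltaM n (M : 'M[C]_n) k :
  (adjmx (ecol k) *m M *m ecol k) 0 0 = M k k.
Proof. exact: form_delta. Qed.

Lemma tr_bound n (A S X : 'M[C]_n) : psd S -> S *m S = adjmx A *m A ->
  adjmx X *m X = 1%:M ->
  \tr (X *m A) + (\tr (X *m A))^* <= 2 * \tr S.
Proof.
move=> pS hSA hXX.
have hS := psd_herm pS.
have [P [d [hPP' hP'P eS hd]]] := herm_spectral hS.
set D := diag_mx d.
have hD : adjmx D = D by apply: adjmx_diag_real.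
have PSP : P *m S *m adjmx P = D.
  by rewrite eS !mulmxA hPP' mul1mx -mulmxA hPP' mulmx1.
have hs k : 0 <= d 0 k.
  have := pS (adjmx P *m ecol k); rewrite adjmxM adjmxK.
  have -> : adjmx (ecol k) *m P *m S *m (adjmx P *m ecol k) =
            adjmx (ecol k) *m (P *m S *m adjmx P) *m ecol k by rewrite !mulmxA.
  by rewrite form_deltaM PSP diagE.
have [B eB] : {B | B = A *m adjmx P} by exists (A *m adjmx P).
have BB : adjmx B *m B = D *m D.
  rewrite eB adjmxM adjmxK.
  have -> : P *m adjmx A *m (A *m adjmx P) = P *m (adjmx A *m A) *m adjmx P.
    by rewrite !mulmxA.
  rewrite -hSA eS !mulmxA hPP' mul1mx -(mulmxA D P) hPP' mulmx1.
  by rewrite -mulmxA hPP' mulmx1.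
have [Q eQ] : {Q | Q = P *m X *m B} by exists (P *m X *m B).
have eT : \tr (X *m A) = \sum_k Q k k.
  by rewrite -/(mxtrace Q) eQ eB !mulmxA [in RHS]mxtrace_mulC !mulmxA hP'P mul1mx.
have eSt : \tr S = \sum_k d 0 k.
  by rewrite eS mxtrace_mulC mulmxA hPP' mul1mx mxtrace_diag.
have [M0 eM0] : {M0 | M0 = X *m B - adjmx P *m D} by exists (X *m B - adjmx P *m D).
have eM : adjmx M0 *m M0 = D *m D - adjmx (D *m Q) - (D *m Q - D *m D).
  have -> : adjmx M0 = adjmx B *m adjmx X - D *m P.
    by rewrite eM0 adjmxB !adjmxM adjmxK hD.
  rewrite eM0 mulmxBl !mulmxBr.
  have -> : adjmx B *m adjmx X *m (X *m B) = D *m D.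
    by rewrite mulmxA -(mulmxA _ (adjmx X)) hXX mulmx1 BB.
  have -> : D *m P *m (adjmx P *m D) = D *m D.
    by rewrite mulmxA -(mulmxA D) hPP' mulmx1.
  have -> : adjmx B *m adjmx X *m (adjmx P *m D) = adjmx (D *m Q).
    by rewrite eQ !adjmxM hD !mulmxA.
  have -> : D *m P *m (X *m B) = D *m Q by rewrite eQ !mulmxA.
  by [].
have key k : Q k k + (Q k k)^* <= 2 * d 0 k.
  have := adjM_diag_ge0 M0 k.
  rewrite eM !(addmxE', oppmxE') adjmxE !diag_mulE diagE rmorphM /=.
  have -> : (d 0 k)^* = d 0 k by apply/CrealP.
  have [dk0|dkpos] := eqVneq (d 0 k) 0.
    have hB : forall i, B i k = 0.
      apply: adjM_diag_eq0; rewrite BB diag_mulE diagE dk0 mul0r //.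
    have -> : Q k k = 0.
      by rewrite eQ mxE big1 // => i _; rewrite hB mulr0.
    by move=> _; rewrite dk0 conjC0 addr0 mulr0.
  have dpos : 0 < d 0 k by rewrite lt_def dkpos hs.
  move=> h.
  have : 0 <= d 0 k * (2 * d 0 k - (Q k k + (Q k k)^*)).
    by move: h; congr (0 <= _); ring.
  by rewrite pmulr_rge0 // subr_ge0.
rewrite eT eSt rmorph_sum -big_split /= mulr_sumr.
by apply: ler_sum => k _; apply: key.
Qed.

Lemma conj_mul n (P M N : 'M[C]_n) : P *m adjmx P = 1%:M ->
  (adjmx P *m M *m P) *m (adjmx P *m N *m P) = adjmx P *m (M *m N) *m P.
Proof. by move=> hP; rewrite -!mulmxA (mulmxA P) hP mul1mx. Qed.

Lemma conj_tr n (P M : 'M[C]_n) : P *m adjmx P = 1%:M ->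
  \tr (adjmx P *m M *m P) = \tr M.
Proof. by move=> hP; rewrite mxtrace_mulC mulmxA hP mul1mx. Qed.

Lemma conj_adj n (P M : 'M[C]_n) :
  adjmx (adjmx P *m M *m P) = adjmx P *m adjmx M *m P.
Proof. by rewrite !adjmxM adjmxK mulmxA. Qed.

Lemma diag_form_ge0 n (e : 'rV[C]_n) (w : 'cV[C]_n) :
  (forall k, 0 <= e 0 k) -> 0 <= (adjmx w *m diag_mx e *m w) 0 0.
Proof.
move=> he; rewrite mul_mx_diag mxE; apply: sumr_ge0 => j _.
rewrite !mxE mulrAC; apply: mulr_ge0 => //.
by rewrite mulrC; exact: mul_conjC_ge0.
Qed.

Lemma herm_abs n (A : 'M[C]_n) : adjmx A = A -> exists S X : 'M[C]_n,
  [/\ psd S, S *m S = adjmx A *m A, \tr S = \tr (X *m A), 0 <= \tr S &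
      (adjmx X = X /\ adjmx X *m X = 1%:M)].
Proof.
move=> hA; have [P [d [hPP' hP'P eA hd]]] := herm_spectral hA.
pose ad := \row_k `|d 0 k|.
pose sg := \row_k (if 0 <= d 0 k then 1 else -1 : C).
exists (adjmx P *m diag_mx ad *m P), (adjmx P *m diag_mx sg *m P).
have sgr k : sg 0 k \is Num.real.
  by rewrite mxE; case: ifP => _; rewrite ?rpred1 ?rpredN1.
have hX : adjmx (adjmx P *m diag_mx sg *m P) = adjmx P *m diag_mx sg *m P.
  by rewrite conj_adj adjmx_diag_real.
split.
- move=> v.
  have -> : adjmx v *m (adjmx P *m diag_mx ad *m P) *m v =
            adjmx (P *m v) *m diag_mx ad *m (P *m v).
    by rewrite adjmxM !mulmxA.
  by apply: diag_form_ge0 => k; rewrite mxE normr_ge0.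
- rewrite hA eA !conj_mul // !mulmx_diag; congr (_ *m diag_mx _ *m _).
  by apply/rowP => k; rewrite !mxE -!expr2 real_normK.
- rewrite eA conj_mul // !conj_tr // mul_diag_mx !mxtrace_diag /mxtrace.
  apply: eq_bigr => k _; rewrite !mxE eqxx mulr1n.
  case: ifP => h0; first by rewrite mul1r ger0_norm.
  have : d 0 k <= 0 by move: (hd k); rewrite realE h0.
  by move=> /ler0_norm ->; rewrite mulN1r.
- by rewrite conj_tr // mxtrace_diag; apply: sumr_ge0 => k _; rewrite mxE normr_ge0.
- split => //; rewrite hX conj_mul //.
  have -> : diag_mx sg *m diag_mx sg = 1%:M.
    rewrite mulmx_diag; apply/matrixP => i j; rewrite !mxE.
    by case: ifP => _; rewrite ?mulr1 ?mulrNN ?mulr1.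
  by rewrite mulmx1 hP'P.
Qed.

Definition Fm n (rho M N : 'M[C]_n) := \tr (M *m rho *m adjmx N).

Lemma Fm_ge0 n (rho M : 'M[C]_n) : psd rho -> 0 <= Fm rho M M.
Proof.
move=> pr; rewrite /Fm /mxtrace; apply: sumr_ge0 => i _.
have -> : (M *m rho *m adjmx M) i i =
   (adjmx (adjmx (row i M)) *m rho *m adjmx (row i M)) 0 0.
  rewrite adjmxK !mxE; apply: eq_bigr => j _; rewrite !mxE; congr (_ * _).
  by apply: eq_bigr => k _; rewrite !mxE.
exact: pr.
Qed.

Lemma Fm_Dl n (rho M1 M2 N : 'M[C]_n) :
  Fm rho (M1 + M2) N = Fm rho M1 N + Fm rho M2 N.
Proof. by rewrite /Fm !mulmxDl mxtraceD. Qed.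
Lemma Fm_Nl n (rho M N : 'M[C]_n) : Fm rho (- M) N = - Fm rho M N.
Proof. by rewrite /Fm !mulNmx raddfN. Qed.
Lemma Fm_Bl n (rho M1 M2 N : 'M[C]_n) :
  Fm rho (M1 - M2) N = Fm rho M1 N - Fm rho M2 N.
Proof. by rewrite Fm_Dl Fm_Nl. Qed.
Lemma Fm_Zl n (rho M N : 'M[C]_n) c : Fm rho (c *: M) N = c * Fm rho M N.
Proof. by rewrite /Fm -!scalemxAl mxtraceZ. Qed.
Lemma Fm_Dr n (rho M N1 N2 : 'M[C]_n) :
  Fm rho M (N1 + N2) = Fm rho M N1 + Fm rho M N2.
Proof. by rewrite /Fm adjmxD mulmxDr mxtraceD. Qed.
Lemma Fm_Nr n (rho M N : 'M[C]_n) : Fm rho M (- N) = - Fm rho M N.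
Proof. by rewrite /Fm adjmxN mulmxN raddfN. Qed.
Lemma Fm_Br n (rho M N1 N2 : 'M[C]_n) :
  Fm rho M (N1 - N2) = Fm rho M N1 - Fm rho M N2.
Proof. by rewrite Fm_Dr Fm_Nr. Qed.
Lemma Fm_Zr n (rho M N : 'M[C]_n) c : Fm rho M (c *: N) = c^* * Fm rho M N.
Proof. by rewrite /Fm adjmxZ -scalemxAr mxtraceZ. Qed.

Lemma conjR (x : R) : (toC x)^* = toC x.
Proof. by apply/CrealP/complex_realP; exists x. Qed.

Lemma gentle n (rho X Pi : 'M[C]_n) (s eps T : R) :
  psd rho -> \tr rho = 1 -> adjmx Pi = Pi -> Pi *m Pi = Pi ->
  \tr (rho *m Pi) = toC (s ^+ 2) -> 0 < s -> s <= 1 ->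
  adjmx X = X -> adjmx X *m X = 1%:M -> 1 - s ^+ 2 <= eps ^+ 2 / 8 ->
  0 < eps ->
  \tr (X *m ((toC (s ^+ 2))^-1 *: (Pi *m rho *m Pi) - rho)) = toC T ->
  T <= eps.
Proof.
move=> pr tr1 hPi PP trP s0 s1 hX hXX e8 e0 hT.
have XX : X *m X = 1%:M by rewrite -{1}hX.
set p := toC (s ^+ 2) in trP hT.
pose Y := toC 4 *: (X *m Pi) - toC (4 * s) *: X - toC eps *: Pi
          - toC (eps * s) *: 1%:M.
have := Fm_ge0 Y pr.
rewrite /Y !(Fm_Bl, Fm_Zl) !(Fm_Br, Fm_Zr) !conjR.
have f1 : Fm rho (X *m Pi) (X *m Pi) = p.
  rewrite /Fm adjmxM hX hPi !mulmxA mxtrace_mulC !mulmxA XX mul1mx.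
  by rewrite mxtrace_mulC mulmxA PP mxtrace_mulC.
have f2 : Fm rho (X *m Pi) X = p.
  by rewrite /Fm hX mxtrace_mulC !mulmxA XX mul1mx mxtrace_mulC.
have f3 : Fm rho (X *m Pi) Pi = \tr (X *m Pi *m rho *m Pi) by rewrite /Fm hPi.
have f4 : Fm rho (X *m Pi) 1%:M = \tr (X *m Pi *m rho)
  by rewrite /Fm adjmx1 mulmx1.
have f5 : Fm rho X (X *m Pi) = p.
  by rewrite /Fm adjmxM hX hPi !mulmxA mxtrace_mulC !mulmxA XX mul1mx.
have f6 : Fm rho X X = 1.
  by rewrite /Fm hX mxtrace_mulC mulmxA XX mul1mx.
have f7 : Fm rho X Pi = \tr (X *m rho *m Pi) by rewrite /Fm hPi.
have f8 : Fm rho X 1%:M = \tr (X *m rho) by rewrite /Fm adjmx1 mulmx1.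
have f9 : Fm rho Pi (X *m Pi) = \tr (X *m Pi *m rho *m Pi).
  by rewrite /Fm adjmxM hX hPi !mulmxA mxtrace_mulC !mulmxA.
have f10 : Fm rho Pi X = \tr (X *m Pi *m rho).
  by rewrite /Fm hX mxtrace_mulC !mulmxA.
have f11 : Fm rho Pi Pi = p.
  by rewrite /Fm hPi mxtrace_mulC mulmxA PP mxtrace_mulC.
have f12 : Fm rho Pi 1%:M = p.
  by rewrite /Fm adjmx1 mulmx1 mxtrace_mulC.
have f13 : Fm rho 1%:M (X *m Pi) = \tr (X *m rho *m Pi).
  by rewrite /Fm adjmxM hX hPi mul1mx mulmxA mxtrace_mulC !mulmxA.
have f14 : Fm rho 1%:M X = \tr (X *m rho).
  by rewrite /Fm hX mul1mx mxtrace_mulC.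
have f15 : Fm rho 1%:M Pi = p by rewrite /Fm hPi mul1mx.
have f16 : Fm rho 1%:M 1%:M = 1 by rewrite /Fm adjmx1 mul1mx mulmx1.
rewrite f1 f2 f3 f4 f5 f6 f7 f8 f9 f10 f11 f12 f13 f14 f15 f16.
move: hT; rewrite mulmxBr -scalemxAr raddfB /= mxtraceZ !mulmxA.
set t1 := \tr (X *m Pi *m rho *m Pi).
set t4 := \tr (X *m rho).
have pn0 : p != 0.
  apply/eqP => /(congr1 (@complex.Re R)) /= /eqP; rewrite expf_eq0 /=.
  by rewrite (gt_eqF s0).
move=> hT.
have et1 : t1 = p * (toC T + t4) by rewrite -hT subrK mulrA mulfV // mul1r.
rewrite et1 /p => h.
have : 0 <= toC (s ^+ 2 * (32 - 32 * s + 2 * eps ^+ 2 + 2 * eps ^+ 2 * s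
                          - 8 * eps * T)).
  move: h; congr (0 <= _).
  rewrite !(rmorphM, rmorphD, rmorphB, rmorphXn, rmorph_nat) /=.
  ring.
rewrite ler0c => h2.
have s2 : 0 < s ^+ 2 by apply: exprn_gt0.
have h3 : 0 <= 32 - 32 * s + 2 * eps ^+ 2 + 2 * eps ^+ 2 * s - 8 * eps * T.
  by rewrite -(pmulr_rge0 _ s2).
have h4 : 1 - s <= eps ^+ 2 / 8 by apply: le_trans e8; nra.
have h5 : 8 * eps * T <= 8 * eps * eps by nra.
by rewrite -(ler_pM2l (_ : 0 < 8 * eps)) //; nra.
Qed.

Lemma projI_diag n (I : {set 'I_n}) :
  projI R I = diag_mx (\row_j ((j \in I)%:R)).
Proof.
apply/matrixP => i j; rewrite !mxE; case: eqVneq => [->|]; first by rewrite mulr1n.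
by rewrite mulr0n.
Qed.

Lemma projI_herm n (I : {set 'I_n}) : adjmx (projI R I) = projI R I.
Proof.
rewrite projI_diag adjmx_diag_real // => k; rewrite mxE.
by case: (k \in I); rewrite ?rpred1 ?rpred0.
Qed.

Lemma projI_idem n (I : {set 'I_n}) :
  projI R I *m projI R I = projI R I.
Proof.
rewrite projI_diag mulmx_diag; congr diag_mx; apply/rowP => k; rewrite !mxE.
by case: (k \in I); rewrite ?mulr1 ?mulr0.
Qed.

Lemma proj_sandwich n (I : {set 'I_n}) (M : 'M[C]_n) j :
  (projI R I *m M *m projI R I) j j = if j \in I then M j j else 0.
Proof.
rewrite projI_diag mul_mx_diag mxE diag_mulE !mxE.
by case: (j \in I); rewrite ?mul1r ?mulr1 ?mul0r ?mulr0.
Qed.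

Lemma proj_right n (I : {set 'I_n}) (M : 'M[C]_n) j :
  (M *m projI R I) j j = if j \in I then M j j else 0.
Proof.
rewrite projI_diag mul_mx_diag mxE !mxE.
by case: (j \in I); rewrite ?mulr1 ?mulr0.
Qed.

Lemma rho_diag n (rho : 'M[C]_n) : psd rho -> forall j,
  rho j j = toC (diagv rho 0 j) /\ 0 <= diagv rho 0 j.
Proof.
move=> pr j; have h := pr (ecol j); rewrite form_delta in h.
have e : rho j j = toC (diagv rho 0 j).
  by rewrite mxE RRe_real //; apply: ger0_real.
by split => //; rewrite -ler0c -e.
Qed.

Lemma tr_proj n (rho : 'M[C]_n) (I : {set 'I_n}) : psd rho ->
  \tr (rho *m projI R I) = toC (\sum_(i in I) diagv rho 0 i).
Proof.
move=> pr; rewrite /mxtrace rmorph_sum /= [RHS]big_mkcond /=.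
apply: eq_bigr => j _; rewrite proj_right; case: (j \in I) => //.
by case: (rho_diag pr j).
Qed.

End Work.

Section Work2.
Variable R : rcfType.
Local Notation C := R[i].
Local Notation toC x := ((x)%:C)%C.
Local Notation ecol i := (delta_mx i 0 : 'cV[C]_ _).

Lemma diag_restrict n (rho : 'M[C]_n) (I : {set 'I_n}) : psd rho ->
  diagv ((\tr (rho *m projI R I))^-1 *: (projI R I *m rho *m projI R I)) =
  (\sum_(i in I) diagv rho 0 i)^-1 *:
     \row_j (if j \in I then diagv rho 0 j else 0).
Proof.
move=> pr; apply/rowP => j; rewrite (tr_proj _ pr).
rewrite /diagv [in LHS]mxE [in RHS]mxE [X in complex.Re X]mxE proj_sandwich.
rewrite [in RHS]mxE.
case: (j \in I); last first. by rewrite !mulr0. 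
have [-> _] := rho_diag pr j.
by rewrite -fmorphV -rmorphM.
Qed.

Lemma sigma_real n (rho : 'M[C]_n) (I : {set 'I_n}) : psd rho -> forall j,
  ((\tr (rho *m projI R I))^-1 *: (projI R I *m rho *m projI R I)) j j =
  toC (diagv ((\tr (rho *m projI R I))^-1 *: (projI R I *m rho *m projI R I)) 0 j).
Proof.
move=> pr j; rewrite [in RHS]mxE RRe_real //.
rewrite mxE proj_sandwich (tr_proj _ pr); apply: rpredM.
  by rewrite -fmorphV; apply/complex_realP; eexists.
case: (j \in I); last exact: rpred0.
by have [-> _] := rho_diag pr j; apply/complex_realP; eexists.
Qed.

Lemma sum_diag_rho n (rho : 'M[C]_n) : is_state rho ->
  \sum_j diagv rho 0 j = 1.
Proof.
move=> [pr tr1]; apply: (@complexI R); rewrite rmorph_sum rmorph1 -tr1 /=.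
by rewrite /mxtrace; apply: eq_bigr => j _; have [-> _] := rho_diag pr j.
Qed.

Lemma part1 n (rho sigma : 'M[C]_n) eps : is_state rho ->
  Vq eps rho sigma -> Vc eps (diagv rho) (diagv sigma).
Proof.
move=> [pr tr1] [I [hp -> [t [[S [pS hSA trS]] tle]]]].
exists I; split.
- by move: hp; rewrite (tr_proj _ pr) ltcE /= => /andP [].
- exact: diag_restrict.
set sg := (\tr (rho *m projI R I))^-1 *: (projI R I *m rho *m projI R I).
pose a j := diagv sg 0 j - diagv rho 0 j.
have hA j : (sg - rho) j j = toC (a j).
  rewrite addmxE' oppmxE' /sg (sigma_real _ pr) -/sg.
  by have [-> _] := rho_diag pr j; rewrite /a rmorphB.
pose x := \row_j toC ((if 0 <= a j then 1 else -1) : R).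
have hxr (k : 'I_n) : x 0 k \is Num.real by rewrite mxE; apply/complex_realP; eexists.
have hXX : adjmx (diag_mx x) *m diag_mx x = 1%:M.
  rewrite adjmx_diag_real // mulmx_diag; apply/matrixP => i j; rewrite !mxE.
  by case: ifP => _; rewrite ?rmorph1 ?rmorphN1 ?mulr1 ?mulrNN ?mulr1.
have hb := tr_bound pS hSA hXX.
have eT : \tr (diag_mx x *m (sg - rho)) = toC (\sum_j `|a j|).
  rewrite /mxtrace rmorph_sum; apply: eq_bigr => j _.
  rewrite diag_mulE hA mxE -rmorphM; congr (toC _).
  case: ifP => h; first by rewrite mul1r ger0_norm.
  by rewrite mulN1r ler0_norm // le_eqVlt; move: h; case: ltgtP.
rewrite eT trS conjR -rmorphD -(rmorph_nat (real_complex R)) -rmorphM lecR in hb.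
rewrite /l1norm.
have -> : \sum_j `|(diagv sg - diagv rho) 0 j| = \sum_j `|a j|.
  by apply: eq_bigr => j _; rewrite mxE [(- diagv rho) 0 j]mxE.
lra.
Qed.

Lemma part2 n (rho : 'M[C]_n) eps q : is_state rho -> 0 < eps ->
  Vc (eps ^+ 2 / 4) (diagv rho) q ->
  exists2 sigma, Vq eps rho sigma & diagv sigma = q.
Proof.
move=> [pr tr1] e0 [I [hP -> hl1]].
have sum1 := sum_diag_rho (conj pr tr1).
set P := \sum_(i in I) diagv rho 0 i in hP hl1 *.
set sg := (\tr (rho *m projI R I))^-1 *: (projI R I *m rho *m projI R I).
exists sg; last exact: diag_restrict.
have trP : \tr (rho *m projI R I) = toC P by rewrite (tr_proj _ pr).
exists I; split => //.
  by rewrite trP ltcE /= eqxx hP.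
have pv0 j : 0 <= diagv rho 0 j by case: (rho_diag pr j).
have P1 : P <= 1.
  rewrite -sum1 (bigID (fun j => j \in I)) /= lerDl.
  by apply: sumr_ge0 => j _.
have e8 : 1 - P <= eps ^+ 2 / 8.
  have : 2 * (1 - P) <= eps ^+ 2 / 4; last by lra.
  apply: le_trans hl1; rewrite /l1norm (bigID (fun j => j \in I)) /=.
  have e1 : \sum_(j | j \in I) (P^-1 * diagv rho 0 j - diagv rho 0 j) = 1 - P.
    rewrite sumrB -mulr_sumr -/P mulVf //; exact: lt0r_neq0.
  have e2 : \sum_(j | j \notin I) diagv rho 0 j = 1 - P.
    by rewrite -sum1 [in RHS](bigID (fun j => j \in I)) /= -/P; ring.
  have -> : 2 * (1 - P) = (1 - P) + (1 - P) by ring.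
  rewrite -{1}e1 -e2; apply: lerD; apply: ler_sum => j hj; rewrite !mxE.
    by rewrite hj; exact: ler_norm.
  move: hj; case: (j \in I) => // _; rewrite mulr0 add0r normrN ger0_norm //.
  by have := pv0 j; rewrite mxE.
have hA : adjmx (sg - rho) = sg - rho.
  rewrite adjmxB (psd_herm pr) /sg adjmxZ !adjmxM projI_herm (psd_herm pr).
  by rewrite trP -fmorphV conjR mulmxA.
have [S [X [pS hSA trS S0 [hX hXX]]]] := herm_abs hA.
exists (complex.Re (\tr S)); split.
  by exists S; split => //; rewrite RRe_real //; apply: ger0_real.
pose s := Num.sqrt P.
have s2 : s ^+ 2 = P by rewrite sqr_sqrtr // ltW.
apply: (@gentle _ _ rho X (projI R I) s eps) => //.
- exact: projI_herm.
- exact: projI_idem.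
- by rewrite s2.
- by rewrite sqrtr_gt0.
- have := sqrtr_ge0 P; rewrite -/s; nra.
- by rewrite s2.
- rewrite s2 -trP -/sg -trS RRe_real //; exact: ger0_real.
Qed.

End Work2.

Unset Implicit Arguments.

Theorem lemma9 (R : rcfType) (d : nat) (rho : 'M[R[i]]_d) (eps : R)
    (f : 'rV[R]_d -> R) :
  is_state rho -> 0 < eps ->
  (forall sigma, Vq eps rho sigma ->
     exists2 q, Vc eps (diagv rho) q & f q <= f (diagv sigma)) /\
  (forall q, Vc (eps ^+ 2 / 4) (diagv rho) q ->
     exists2 sigma, Vq eps rho sigma & f (diagv sigma) <= f q).
Proof.
move=> hst e0; split.
- move=> sigma hV; exists (diagv sigma) => //; exact: part1 hst hV.
- move=> q hV; have [sigma hs hd] := part2 hst e0 hV.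
  by exists sigma => //; rewrite hd.
Qed.
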